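(* $\mathbf{K}^{\nabla\bullet}$ is sound and strongly complete with respect to the class of all frames: for every set $\Gamma\cup\{\phi\}\subseteq\mathcal{L}(\nabla,\bullet)$, $\Gamma\vdash_{\mathbf{K}^{\nabla\bullet}}\phi$ iff for every Kripke model $\mathcal{M}$ and state $s$, if $\mathcal{M},s\vDash\Gamma$ then $\mathcal{M},s\vDash\phi$.
   Context: $\mathcal{L}(\nabla,\bullet)$: $\phi::=p\mid\neg\phi\mid\phi\land\phi\mid\nabla\phi\mid\bullet\phi$ over a nonempty set $\mathbf{P}$ of propositional variables; $\Delta\phi:=\neg\nabla\phi$, $\circ\phi:=\neg\bullet\phi$. Kripke models $\langle S,R,V\rangle$ ($S\neq\emptyset$, $R\subseteq S\times S$, $V:\mathbf{P}\to\mathcal{P}(S)$): $s\vDash\nabla\phi$ iff there are $t,u$ with $sRt$, $sRu$, $t\vDash\phi$, $u\nvDash\phi$; $s\vDash\bullet\phi$ iff $s\vDash\phi$ and there is $t$ with $sRt$, $t\nvDash\phi$. The Hilbert system $\mathbf{K}^{\nabla\bullet}$ has axioms: A0 all propositional tautologies; A1 $\bullet\phi\to\phi$; A2 $\nabla\phi\leftrightarrow\nabla\neg\phi$; A3 $\bullet(\psi\to\phi)\land\phi\to\bullet\phi$; A4 $\nabla(\phi\land\psi)\to\nabla\phi\vee\nabla\psi$; A5 $\bullet(\phi\land\psi)\to\bullet\phi\vee\bullet\psi$; A6 $\nabla\phi\to\bullet\phi\vee\bullet\neg\phi$; A7 $\bullet(\phi\to\psi)\land\bullet(\neg\phi\to\chi)\to\nabla\phi$;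 rules R1 $\phi/\Delta\phi$; R2 $\phi/\circ\phi$; R3 $\phi\leftrightarrow\psi/\Delta\phi\leftrightarrow\Delta\psi$; R4 $\phi\leftrightarrow\psi/\circ\phi\leftrightarrow\circ\psi$; MP. $\Gamma\vdash\phi$ means $\vdash(\gamma_1\land\dots\land\gamma_n)\to\phi$ for some finite $\{\gamma_1,\dots,\gamma_n\}\subseteq\Gamma$. *)

(* Defs.v *)
From Stdlib Require Import List.
Import ListNotations.
Set Implicit Arguments.

Section Logic.
Variable P : Type.

Inductive form : Type :=
| Var : P -> form
| Neg : form -> form
| And : form -> form -> form
| Nab : form -> form
| Bul : form -> form.

Definition Delta (a : form) : form := Neg (Nab a).
Definition Circ (a : form) : form := Neg (Bul a).
Definition Imp (a b : form) : form := Neg (And a (Neg b)).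
Definition Or (a b : form) : form := Neg (And (Neg a) (Neg b)).
Definition Iff (a b : form) : form := And (Imp a b) (Imp b a).

(* Propositional tautologies: true under every Boolean assignment to the
   formulas whose main connective is not propositional (variables, nabla, bullet). *)
Fixpoint beval (v : form -> bool) (a : form) : bool :=
  match a with
  | Var _ => v a
  | Neg b => negb (beval v b)
  | And b c => andb (beval v b) (beval v c)
  | Nab _ => v a
  | Bul _ => v a
  end.

Definition tautology (a : form) : Prop := forall v : form -> bool, beval v a = true.

Inductive provable : form -> Prop :=
| A0 : forall a, tautology a -> provable a
| A1 : forall a, provable (Imp (Bul a) a)
| A2 : forall a, provable (Iff (Nab a) (Nab (Neg a)))
| A3 : forall a b, provable (Imp (And (Bul (Imp b a)) a) (Bul a))
| A4 : forall a b, provable (Imp (Nab (And a b)) (Or (Nab a) (Nab b)))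
| A5 : forall a b, provable (Imp (Bul (And a b)) (Or (Bul a) (Bul b)))
| A6 : forall a, provable (Imp (Nab a) (Or (Bul a) (Bul (Neg a))))
| A7 : forall a b c,
    provable (Imp (And (Bul (Imp a b)) (Bul (Imp (Neg a) c))) (Nab a))
| R1 : forall a, provable a -> provable (Delta a)
| R2 : forall a, provable a -> provable (Circ a)
| R3 : forall a b, provable (Iff a b) -> provable (Iff (Delta a) (Delta b))
| R4 : forall a b, provable (Iff a b) -> provable (Iff (Circ a) (Circ b))
| MP : forall a b, provable (Imp a b) -> provable a -> provable b.

Definition derives (Gamma : form -> Prop) (phi : form) : Prop :=
  exists l : list form, (forall g, In g l -> Gamma g) /\
    match l with
    | [] => provable phi
    | g :: l' => provable (Imp (fold_left And l' g) phi)
    end.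

Fixpoint sat (S : Type) (R : S -> S -> Prop) (V : P -> S -> Prop) (s : S) (a : form)
  : Prop :=
  match a with
  | Var p => V p s
  | Neg b => ~ sat R V s b
  | And b c => sat R V s b /\ sat R V s c
  | Nab b => exists t u, R s t /\ R s u /\ sat R V t b /\ ~ sat R V u b
  | Bul b => sat R V s b /\ exists t, R s t /\ ~ sat R V t b
  end.

End Logic.

(* Main.v *)
Require Import Defs.
From Stdlib Require Import List Classical ClassicalEpsilon FunctionalExtensionality PropExtensionality.
Import ListNotations.

Ltac taut :=
  let v := fresh "v" in intro v; unfold Imp, Iff, Or, Delta, Circ in *; simpl;
  repeat match goal with
         | |- context [beval v ?x] => destruct (beval v x)
         | |- context [v ?x] => destruct (v x)
         end; reflexivity.

Lemma taut_mp {P : Type} (h c : form P) :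
  tautology (Imp h c) -> provable h -> provable c.
Proof. intros T H. apply (MP (A0 T) H). Qed.

Lemma taut_mp2 {P : Type} (h1 h2 c : form P) :
  tautology (Imp h1 (Imp h2 c)) -> provable h1 -> provable h2 -> provable c.
Proof. intros T H1 H2. exact (MP (MP (A0 T) H1) H2). Qed.

Section Sound.
Context {P S : Type} (R : S -> S -> Prop) (V : P -> S -> Prop).

Definition bv (s : S) (a : form P) : bool :=
  if excluded_middle_informative (sat R V s a) then true else false.

Lemma bv_spec s a : bv s a = true <-> sat R V s a.
Proof. unfold bv; destruct excluded_middle_informative; split; congruence || tauto. Qed.

Lemma beval_sat s a : beval (bv s) a = true <-> sat R V s a.
Proof.
  induction a; simpl; try apply bv_spec.
  - rewrite Bool.negb_true_iff, <- Bool.not_true_iff_false. tauto.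
  - rewrite Bool.andb_true_iff. tauto.
Qed.

Lemma sat_imp s a b : sat R V s (Imp a b) <-> (sat R V s a -> sat R V s b).
Proof. simpl. split; [intros H Ha; apply NNPP; tauto | tauto]. Qed.

Lemma sat_iff s a b : sat R V s (Iff a b) <-> (sat R V s a <-> sat R V s b).
Proof. unfold Iff. change (sat R V s (Imp a b) /\ sat R V s (Imp b a) <-> (sat R V s a <-> sat R V s b)). rewrite !sat_imp. tauto. Qed.

Lemma sat_or s a b : sat R V s (Or a b) <-> (sat R V s a \/ sat R V s b).
Proof. simpl. split; [intro H; apply NNPP; tauto | tauto]. Qed.

End Sound.

Lemma soundness {P : Type} (a : form P) : provable a ->
  forall (S : Type) (R : S -> S -> Prop) (V : P -> S -> Prop) (s : S), sat R V s a.
Proof.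
  induction 1; intros S R V s.
  - apply beval_sat. apply H.
  - apply sat_imp. simpl. tauto.
  - apply sat_iff. simpl. split.
    + intros (t & u & Ht & Hu & H1 & H2). exists u, t. repeat split; auto.
    + intros (t & u & Ht & Hu & H1 & H2). exists u, t. repeat split; auto. apply NNPP; auto.
  - apply sat_imp. intros [[H1 [t [Ht Hn]]] H2]. split; auto.
    exists t; split; auto. intro Ha. apply Hn. apply sat_imp. auto.
  - apply sat_imp. intros (t & u & Ht & Hu & [H1 H2] & H3). apply sat_or.
    destruct (classic (sat R V u a)).
    + right. exists t, u. repeat split; auto. intro X; apply H3; split; auto.
    + left. exists t, u. repeat split; auto.
  - apply sat_imp. intros [[H1 H2] [t [Ht Hn]]]. apply sat_or.
    destruct (classic (sat R V t a)).
    + right. split; auto. exists t. split; auto. intro X; apply Hn; split; auto.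
    + left. split; auto. exists t. split; auto.
  - apply sat_imp. intros (t & u & Ht & Hu & H1 & H2). apply sat_or.
    destruct (classic (sat R V s a)).
    + left. split; auto. exists u; auto.
    + right. split; auto. exists t. split; auto.
  - apply sat_imp. intros [[H1 [t [Ht Hn]]] [H2 [u [Hu Hn2]]]].
    rewrite sat_imp in Hn. rewrite sat_imp in Hn2.
    exists t, u. repeat split; auto.
    + apply NNPP. intro X. apply Hn. intro. contradiction.
    + intro X. apply Hn2. intro. contradiction.
  - simpl. intros (t & u & _ & _ & _ & Hu). apply Hu. apply IHprovable.
  - simpl. intros [_ [t [_ Ht]]]. apply Ht. apply IHprovable.
  - apply sat_iff. simpl.
    assert (E : forall x, sat R V x a <-> sat R V x b) by (intro x; apply sat_iff; apply IHprovable).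
    split; intros HH (t & u & Ht & Hu & H1 & H2); apply HH; exists t, u;
      repeat split; auto; try (apply E; auto); rewrite E || rewrite <- E; auto.
  - apply sat_iff. simpl.
    assert (E : forall x, sat R V x a <-> sat R V x b) by (intro x; apply sat_iff; apply IHprovable).
    split; intros HH [H1 [t [Ht H2]]]; apply HH; split; [apply E; auto | exists t; split; auto; rewrite E || rewrite <- E; auto
     | apply E; auto | exists t; split; auto; rewrite E || rewrite <- E; auto].
  - pose proof (IHprovable1 S R V s) as H1. rewrite sat_imp in H1. auto.
Qed.

Section Syn.
Context {P : Type} (p0 : P).

Definition Top : form P := Imp (Var p0) (Var p0).
Definition Bot : form P := Neg Top.
Fixpoint conj (l : list (form P)) : form P :=
  match l with [] => Top | a :: l => And a (conj l) end.
Definition incl (X : form P -> Prop) (l : list (form P)) := forall g, In g l -> X g.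
Definition der (X : form P -> Prop) (a : form P) :=
  exists l, incl X l /\ provable (Imp (conj l) a).
Definition consis (X : form P -> Prop) := ~ der X Bot.
Definition add (X : form P -> Prop) (a : form P) := fun b => X b \/ b = a.
Definition mcs (M : form P -> Prop) := consis M /\ forall a, consis (add M a) -> M a.

Lemma beval_top (v : form P -> bool) : beval v Top = true.
Proof. unfold Top, Imp; simpl. destruct (v (Var p0)); reflexivity. Qed.

Lemma beval_imp (v : form P -> bool) (a b : form P) : beval v (Imp a b) = true <-> (beval v a = true -> beval v b = true).
Proof. unfold Imp; simpl. destruct (beval v a), (beval v b); simpl; intuition congruence. Qed.

Lemma prov_bool (h c : form P) :
  (forall v, beval v h = true -> beval v c = true) -> provable h -> provable c.
Proof. intros H Hh. apply (MP (a := h)); auto. apply A0. intro v. apply beval_imp. auto. Qed.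

Lemma beval_conj_app (v : form P -> bool) l1 l2 :
  beval v (conj (l1 ++ l2)) = andb (beval v (conj l1)) (beval v (conj l2)).
Proof. induction l1; cbn [app conj]. now rewrite beval_top. cbn [beval]. rewrite IHl1. apply Bool.andb_assoc. Qed.

Lemma der_bool2 X a1 a2 b :
  (forall v, beval v a1 = true -> beval v a2 = true -> beval v b = true) ->
  der X a1 -> der X a2 -> der X b.
Proof.
  intros H [l1 [I1 H1]] [l2 [I2 H2]]. exists (l1 ++ l2). split.
  - intros g Hg. apply in_app_or in Hg. destruct Hg; auto.
  - apply (MP (a := Imp (conj l2) a2)); auto.
    apply (prov_bool (Imp (conj l1) a1)); auto.
    intros v E1. apply beval_imp. intro E2. apply beval_imp. intro E3.
    rewrite beval_conj_app, Bool.andb_true_iff in E3. destruct E3.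
    rewrite beval_imp in E1, E2. auto.
Qed.

Lemma der_bool X a b :
  (forall v, beval v a = true -> beval v b = true) -> der X a -> der X b.
Proof. intros H D. apply (der_bool2 X a a b); auto. Qed.

Lemma der_prov X a : provable a -> der X a.
Proof.
  intro H. exists []. split. intros g []. apply (prov_bool a); auto.
  intros v E. apply beval_imp. auto.
Qed.

Lemma der_in X a : X a -> der X a.
Proof.
  intro H. exists [a]. split. intros g [<-|[]]; auto.
  apply A0. intro v. apply beval_imp. simpl. rewrite Bool.andb_true_iff. tauto.
Qed.

Lemma der_mono (X Y : form P -> Prop) a : (forall b, X b -> Y b) -> der X a -> der Y a.
Proof. intros H [l [I D]]. exists l. split; auto. intros g Hg. auto. Qed.

Lemma split_list X a l : incl (add X a) l -> exists l', incl X l' /\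
  forall v, beval v (conj l') = true -> beval v a = true -> beval v (conj l) = true.
Proof.
  induction l as [|g l IH]; intros I.
  - exists []. split. intros g []. intros v _ _. apply beval_top.
  - destruct IH as [l' [I' H']]. intros h Hh; apply I; right; auto.
    destruct (I g (or_introl eq_refl)) as [Xg | ->].
    + exists (g :: l'). split. intros h [<-|Hh]; auto.
      intros v E1 E2. simpl in *. rewrite Bool.andb_true_iff in *. destruct E1. auto.
    + exists l'. split; auto. intros v E1 E2. simpl. rewrite E2, H'; auto.
Qed.

Lemma deduction X a b : der (add X a) b -> der X (Imp a b).
Proof.
  intros [l [I D]]. destruct (split_list X a l I) as [l' [I' H']].
  exists l'. split; auto. apply (prov_bool (Imp (conj l) b)); auto.
  intros v E. rewrite beval_imp in *. intro E1. rewrite beval_imp. intro E2. auto.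
Qed.

Section MCS.
Context (M : form P -> Prop) (HM : mcs M).

Lemma mcs_der a : der M a -> M a.
Proof.
  intro D. apply NNPP. intro N. destruct HM as [C Max].
  assert (~ consis (add M a)) by (intro C'; apply N; apply Max; auto).
  apply C. unfold consis in H. apply NNPP in H. apply deduction in H.
  refine (der_bool2 _ _ _ _ _ H D).
  intros v E1 E2. rewrite beval_imp in E1. auto.
Qed.

Lemma mcs_prov a : provable a -> M a.
Proof. intro. apply mcs_der. apply der_prov; auto. Qed.

Lemma mcs_neg a : M (Neg a) <-> ~ M a.
Proof.
  destruct HM as [C Max]. split.
  - intros H1 H2. apply C. refine (der_bool2 _ _ _ _ _ (der_in _ _ H1) (der_in _ _ H2)).
    intros v E1 E2. simpl in E1. rewrite E2 in E1. discriminate.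
  - intro N. apply mcs_der. apply NNPP. intro N2. apply N. apply Max. intro D.
    apply N2. apply deduction in D. refine (der_bool _ _ _ _ D).
    intros v E. cbn [beval]. rewrite beval_imp in E. unfold Bot in E. cbn [beval] in E. rewrite beval_top in E. destruct (beval v a); simpl in *; auto.

Qed.

Lemma mcs_and a b : M (And a b) <-> M a /\ M b.
Proof.
  split.
  - intro H. split; apply mcs_der; refine (der_bool _ _ _ _ (der_in _ _ H)).
    all: intros v E; simpl in E; rewrite Bool.andb_true_iff in E; tauto.
  - intros [H1 H2]. apply mcs_der.
    refine (der_bool2 _ _ _ _ _ (der_in _ _ H1) (der_in _ _ H2)).
    intros v E1 E2. simpl. rewrite E1, E2. auto.
Qed.

Lemma mcs_imp a b : M (Imp a b) <-> (M a -> M b).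
Proof. unfold Imp. rewrite mcs_neg, mcs_and, mcs_neg. split; intros; [apply NNPP|]; tauto. Qed.

Lemma mcs_or a b : M (Or a b) <-> M a \/ M b.
Proof. unfold Or. rewrite mcs_neg, mcs_and, !mcs_neg. split; intros; [apply NNPP|]; tauto. Qed.

Lemma mcs_iff a b : M (Iff a b) <-> (M a <-> M b).
Proof. unfold Iff. rewrite mcs_and, !mcs_imp. tauto. Qed.

Lemma mcs_mp a b : provable (Imp a b) -> M a -> M b.
Proof. intros H. apply mcs_imp. apply mcs_prov; auto. Qed.

End MCS.
End Syn.

Section Lind.
Context {P : Type} (p0 : P) (X0 : form P -> Prop) (C0 : consis p0 X0).

Definition sub (X Y : form P -> Prop) := forall a, X a -> Y a.

Lemma sub_eq X Y : sub X Y -> sub Y X -> X = Y.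
Proof.
  intros H1 H2. apply functional_extensionality. intro a.
  apply propositional_extensionality. split; auto.
Qed.

Definition succ (X : form P -> Prop) : form P -> Prop :=
  match excluded_middle_informative (exists a, ~ X a /\ consis p0 (add X a)) with
  | left H => add X (proj1_sig (constructive_indefinite_description _ H))
  | right _ => X
  end.

Definition sup (F : (form P -> Prop) -> Prop) : form P -> Prop :=
  fun a => X0 a \/ exists X, F X /\ X a.

Inductive tower : (form P -> Prop) -> Prop :=
| t_succ X : tower X -> tower (succ X)
| t_sup F : (forall X, F X -> tower X) -> tower (sup F).

Lemma succ_ext X : sub X (succ X).
Proof. intros a H. unfold succ. destruct excluded_middle_informative; [left|]; auto. Qed.

Lemma tower_base X : tower X -> sub X0 X.
Proof.
  induction 1.
  - intros a Hz. apply succ_ext; auto.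
  - intros a Hz. left; auto.
Qed.

Definition pivot c := forall x, tower x -> sub x c -> ~ sub c x -> sub (succ x) c.

Lemma L1 c : tower c -> pivot c -> forall x, tower x -> sub x c \/ sub (succ c) x.
Proof.
  intros Tc Pc x Tx. induction Tx as [x Tx IH | F TF IH].
  - destruct IH as [H | H].
    + destruct (classic (sub c x)) as [H' | H'].
      * right. rewrite (sub_eq _ _ H H'). intros a; auto.
      * left. apply Pc; auto.
    + right. intros a Ha. apply succ_ext; auto.
  - destruct (classic (exists X, F X /\ sub (succ c) X)) as [[X [FX HX]] | N].
    + right. intros a Ha. right. exists X; auto.
    + left. intros a [Ha | [X [FX Ha]]].
      * apply (tower_base c Tc); auto.
      * destruct (IH X FX) as [H|H]; auto. exfalso; apply N; eauto.
Qed.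

Lemma L2 c : tower c -> pivot c.
Proof.
  induction 1 as [c Tc IH | F TF IH].
  - intros x Tx H1 H2. destruct (L1 c Tc IH x Tx) as [H | H]; [|contradiction].
    destruct (classic (sub c x)) as [H' | H'].
    + rewrite (sub_eq _ _ H H'). intros a; auto.
    + intros a Ha. apply succ_ext. apply (IH x Tx H H' a Ha).
  - intros x Tx H1 H2.
    destruct (classic (exists d, F d /\ ~ sub d x)) as [[d [Fd Hd]] | N].
    + destruct (L1 d (TF d Fd) (IH d Fd) x Tx) as [H | H].
      * intros a Ha. right. exists d. split; auto. apply (IH d Fd x Tx H Hd); auto.
      * exfalso. apply Hd. intros a Ha. apply H. apply succ_ext; auto.
    + exfalso. apply H2. intros a [Ha | [X [FX Ha]]].
      * apply (tower_base x Tx); auto.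
      * apply NNPP. intro Nx. apply N. exists X. split; auto.
Qed.

Lemma chain x y : tower x -> tower y -> sub x y \/ sub y x.
Proof.
  intros Tx Ty. destruct (L1 y Ty (L2 y Ty) x Tx) as [H|H]; auto.
  right. intros a Ha. apply H. apply succ_ext; auto.
Qed.

Lemma tower_cons X : tower X -> consis p0 X.
Proof.
  induction 1 as [X Tx IH | F TF IH].
  - unfold succ. destruct excluded_middle_informative as [H|H]; auto.
    destruct (constructive_indefinite_description _ H) as [a [Na Ca]]. simpl. auto.
  - intros [l [I D]].
    assert (K : (forall a, In a l -> X0 a) \/ exists Y, F Y /\ forall a, In a l -> Y a).
    { clear D. induction l as [|g l IHl].
      - left. intros a [].
      - destruct IHl as [A | [Y [FY A]]]. intros a Ha; apply I; right; auto.
        + destruct (I g (or_introl eq_refl)) as [G | [Z [FZ G]]].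
          * left. intros a [<-|Ha]; auto.
          * right. exists Z. split; auto. intros a [<-|Ha]; auto.
            apply (tower_base Z (TF Z FZ)); auto.
        + right. destruct (I g (or_introl eq_refl)) as [G | [Z [FZ G]]].
          * exists Y. split; auto. intros a [<-|Ha]; auto. apply (tower_base Y (TF Y FY)); auto.
          * destruct (chain Z Y (TF Z FZ) (TF Y FY)) as [S|S].
            -- exists Y. split; auto. intros a [<-|Ha]; auto.
            -- exists Z. split; auto. intros a [<-|Ha]; auto. }
    destruct K as [A | [Y [FY A]]].
    + apply C0. exists l. auto.
    + apply (IH Y FY). exists l. auto.
Qed.

Lemma lindenbaum : exists M, mcs p0 M /\ sub X0 M.
Proof.
  set (M := sup tower).
  assert (TM : tower M) by (apply t_sup; auto).
  exists M. split; [split|].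
  - apply tower_cons; auto.
  - intros a Ca. apply NNPP. intro Na.
    assert (Sm : sub (succ M) M) by (intros b Hb; right; exists (succ M); split; auto; apply t_succ; auto).
    revert Sm. unfold succ. destruct excluded_middle_informative as [H|H].
    + destruct (constructive_indefinite_description _ H) as [b [Nb Cb]]. simpl.
      intro Sm. apply Nb. apply Sm. right; auto.
    + intros _. apply H. eauto.
  - intros a Ha. left; auto.
Qed.

End Lind.

Ltac bsolve :=
  let v := fresh "v" in let E := fresh "E" in
  intros v E; unfold Iff, Imp, Or in *; simpl in *;
  repeat match goal with
         | H : context [beval v ?x] |- _ => destruct (beval v x)
         | |- context [beval v ?x] => destruct (beval v x)
         | H : context [v ?x] |- _ => destruct (v x)
         | |- context [v ?x] => destruct (v x)
         end; simpl in *; try reflexivity; try discriminate.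

Section Canon.
Context {P : Type} (p0 : P).

Section M.
Context (s : form P -> Prop) (Hs : mcs p0 s).

Lemma m_A1 a : s (Bul a) -> s a.
Proof. apply (mcs_mp p0 s Hs). apply A1. Qed.
Lemma m_A2 a : s (Nab a) <-> s (Nab (Neg a)).
Proof. apply (mcs_iff p0 s Hs). apply (mcs_prov p0 s Hs). apply A2. Qed.
Lemma m_A3 a b : s (Bul (Imp b a)) -> s a -> s (Bul a).
Proof. intros H1 H2. apply (mcs_mp p0 s Hs _ _ (A3 a b)). apply (mcs_and p0 s Hs); auto. Qed.
Lemma m_A4 a b : s (Nab (And a b)) -> s (Nab a) \/ s (Nab b).
Proof. intro H. apply (mcs_or p0 s Hs). apply (mcs_mp p0 s Hs _ _ (A4 a b)); auto. Qed.
Lemma m_A5 a b : s (Bul (And a b)) -> s (Bul a) \/ s (Bul b).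
Proof. intro H. apply (mcs_or p0 s Hs). apply (mcs_mp p0 s Hs _ _ (A5 a b)); auto. Qed.
Lemma m_A6 a : s (Nab a) -> s (Bul a) \/ s (Bul (Neg a)).
Proof. intro H. apply (mcs_or p0 s Hs). apply (mcs_mp p0 s Hs _ _ (A6 a)); auto. Qed.
Lemma m_A7 a b c : s (Bul (Imp a b)) -> s (Bul (Imp (Neg a) c)) -> s (Nab a).
Proof. intros H1 H2. apply (mcs_mp p0 s Hs _ _ (A7 a b c)). apply (mcs_and p0 s Hs); auto. Qed.
Lemma m_bcong a b : provable (Iff a b) -> (s (Bul a) <-> s (Bul b)).
Proof.
  intro H. apply R4 in H. apply (mcs_prov p0 s Hs) in H. rewrite (mcs_iff p0 s Hs) in H.
  unfold Circ in H. rewrite !(mcs_neg p0 s Hs) in H.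
  split; intro X; apply NNPP; tauto.
Qed.
Lemma m_ncong a b : provable (Iff a b) -> (s (Nab a) <-> s (Nab b)).
Proof.
  intro H. apply R3 in H. apply (mcs_prov p0 s Hs) in H. rewrite (mcs_iff p0 s Hs) in H.
  unfold Delta in H. rewrite !(mcs_neg p0 s Hs) in H.
  split; intro X; apply NNPP; tauto.
Qed.
Lemma m_R2 a : provable a -> ~ s (Bul a).
Proof. intro H. apply R2 in H. apply (mcs_prov p0 s Hs) in H. unfold Circ in H.
  apply (mcs_neg p0 s Hs) in H. auto. Qed.

Definition G (b : form P) :=
  (s b /\ ~ s (Bul b)) \/ (s (Neg b) /\ ~ s (Nab b) /\ s (Bul (Neg b))).

Lemma S1 g phi : G g -> provable (Imp g phi) -> s phi -> ~ s (Bul phi).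
Proof.
  intros [[Hg Nb] | [Hg [Nn Bn]]] Hi Hp Bp.
  - apply Nb. apply (m_A3 g (Neg phi)); auto.
    apply (m_bcong phi); auto. refine (prov_bool _ _ _ Hi); bsolve.
  - apply Nn. apply (m_A7 g (Neg g) phi).
    + apply (m_bcong (Neg g)); auto. apply A0. taut.
    + apply (m_bcong phi); auto. refine (prov_bool _ _ _ Hi); bsolve.
Qed.

Lemma S2 g phi : G g -> provable (Imp g phi) -> ~ s (Nab phi).
Proof.
  intros HG Hi Np. destruct (classic (s phi)) as [Hp | Hp].
  - destruct (m_A6 _ Np) as [B | B].
    + exact (S1 g phi HG Hi Hp B).
    + apply m_A1 in B. apply (mcs_neg p0 s Hs) in B. auto.
  - destruct HG as [[Hg Nb] | [Hg [Nn Bn]]].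
    + apply Hp. apply (mcs_mp p0 s Hs g); auto.
    + assert (D : ~ s (Nab (And phi (Neg g)))).
      { intro N. destruct (m_A6 _ N) as [B | B].
        - apply m_A1 in B. apply (mcs_and p0 s Hs) in B. tauto.
        - apply Nn. apply (m_A7 g (Neg g) (Neg phi)).
          + apply (m_bcong (Neg g)); auto. apply A0. taut.
          + apply (m_bcong (Neg (And phi (Neg g)))); auto. apply A0. taut. }
      rewrite (m_ncong phi (Neg (And (Neg g) (Neg (And phi (Neg g)))))) in Np.
      * rewrite <- m_A2 in Np. destruct (m_A4 _ _ Np) as [N | N];
          rewrite <- m_A2 in N; auto.
      * refine (prov_bool _ _ _ Hi); bsolve.
Qed.

Lemma GDelta g : G g -> ~ s (Nab g).
Proof.
  intros [[Hg Nb] | [Hg [Nn Bn]]]; auto. intro N.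
  destruct (m_A6 _ N) as [B|B]; auto. apply m_A1 in B. apply (mcs_neg p0 s Hs) in B. auto.
Qed.

Lemma Hmix h k : G h -> s (Neg k) -> s (Bul (Neg k)) -> s (Bul (Neg (And h k))).
Proof.
  intros Gh Nk Bk.
  rewrite (m_bcong (Neg k) (And (Neg (And h k)) (Or h (Neg k)))) in Bk by (apply A0; taut).
  destruct (m_A5 _ _ Bk) as [B|B]; auto. exfalso.
  apply (S1 h (Or h (Neg k))); auto. apply A0; taut. apply (mcs_or p0 s Hs); auto.
Qed.

Lemma Gand g1 g2 : G g1 -> G g2 -> G (And g1 g2).
Proof.
  intros G1 G2. destruct (classic (s g1 /\ s g2)) as [[H1 H2] | N].
  - left. split. apply (mcs_and p0 s Hs); auto.
    assert (~ s (Bul g1)) by (destruct G1 as [[]|[X _]]; auto; apply (mcs_neg p0 s Hs) in X; tauto).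
    assert (~ s (Bul g2)) by (destruct G2 as [[]|[X _]]; auto; apply (mcs_neg p0 s Hs) in X; tauto).
    intro B. destruct (m_A5 _ _ B); auto.
  - right. split; [|split].
    + apply (mcs_neg p0 s Hs). rewrite (mcs_and p0 s Hs). auto.
    + intro B. destruct (m_A4 _ _ B) as [X|X]; revert X; apply GDelta; auto.
    + destruct (classic (s g2)) as [Y|Y].
      * assert (~ s g1) by tauto. destruct G1 as [[]|[X1 [_ X2]]]; [contradiction|].
        rewrite (m_bcong (Neg (And g1 g2)) (Neg (And g2 g1))) by (apply A0; taut).
        apply Hmix; auto.
      * destruct G2 as [[]|[X1 [_ X2]]]; [contradiction|]. apply Hmix; auto.
Qed.

Lemma Gconj l : (forall g, In g l -> G g) -> G (conj p0 l).
Proof.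
  induction l as [|a l IH]; intro I; simpl.
  - left. split. apply (mcs_prov p0 s Hs). apply A0. unfold Top. taut.
    apply m_R2. apply A0. unfold Top. taut.
  - apply Gand. apply I; left; auto. apply IH. intros g Hg; apply I; right; auto.
Qed.

Lemma existence psi : (forall g, G g -> provable (Imp g psi) -> False) ->
  exists t, mcs p0 t /\ (forall b, G b -> t b) /\ t (Neg psi).
Proof.
  intro H.
  assert (C : consis p0 (add (fun b => G b) (Neg psi))).
  { intro D. apply deduction in D. destruct D as [l [I D]].
    apply (H (conj p0 l)). apply Gconj; exact I.
    refine (prov_bool _ _ _ D). intros v E. rewrite beval_imp in *.
    intro E1. specialize (E E1). rewrite beval_imp in E. unfold Bot in E. cbn [beval] in E.
    rewrite beval_top in E. destruct (beval v psi); simpl in *; auto. }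
  destruct (lindenbaum p0 _ C) as [t [Ht St]]. exists t. split; auto. split.
  - intros b Hb. apply St. left; auto.
  - apply St. right; auto.
Qed.

End M.

Definition W := { M : form P -> Prop | mcs p0 M }.
Definition Rc (x y : W) := forall b, G (proj1_sig x) b -> proj1_sig y b.
Definition Vc (p : P) (x : W) := proj1_sig x (Var p).

Lemma truth a : forall x : W, sat Rc Vc x a <-> proj1_sig x a.
Proof.
  induction a as [p | a IH | a IHa b IHb | a IH | a IH]; intros [x Hx]; simpl.
  - unfold Vc; simpl; tauto.
  - rewrite (mcs_neg p0 x Hx). rewrite (IH (exist _ x Hx)). simpl. tauto.
  - rewrite (mcs_and p0 x Hx). rewrite (IHa (exist _ x Hx)), (IHb (exist _ x Hx)). simpl. tauto.
  - split.
    + intros ([t Ht] & [u Hu] & Rt & Ru & St & Su).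
      rewrite (IH (exist _ t Ht)) in St. rewrite (IH (exist _ u Hu)) in Su. simpl in *.
      apply NNPP. intro Dn.
      destruct (classic (x a)) as [Xa | Xa].
      * destruct (classic (x (Bul a))) as [Ba | Ba].
        -- assert (GN : G x (Neg a)).
           { right. split; [|split].
             - apply (mcs_neg p0 x Hx). intro N. apply (mcs_neg p0 x Hx) in N. auto.
             - rewrite <- (m_A2 x Hx). auto.
             - rewrite <- (m_bcong x Hx a); auto. apply A0; taut. }
           apply Rt in GN. simpl in GN. apply (mcs_neg p0 t Ht) in GN. auto.
        -- apply Su. apply Ru. left. auto.
      * apply (mcs_neg p0 x Hx) in Xa.
        destruct (classic (x (Bul (Neg a)))) as [Ba | Ba].
        -- apply Su. apply Ru. right. auto.
        -- assert (GN : G x (Neg a)) by (left; auto).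
           apply Rt in GN. simpl in GN. apply (mcs_neg p0 t Ht) in GN. auto.
    + intro N.
      destruct (existence x Hx (Neg a)) as [t [Ht [Rt Nt]]].
      { intros g Gg Hi. apply (S2 x Hx g (Neg a) Gg Hi). rewrite <- (m_A2 x Hx). auto. }
      destruct (existence x Hx a) as [u [Hu [Ru Nu]]].
      { intros g Gg Hi. apply (S2 x Hx g a Gg Hi). auto. }
      exists (exist _ t Ht), (exist _ u Hu). split; [|split; [|split]]; auto.
      * apply (IH (exist _ t Ht)). simpl. apply (mcs_neg p0 t Ht) in Nt.
        apply NNPP. intro Y. apply Nt. apply (mcs_neg p0 t Ht). auto.
      * rewrite (IH (exist _ u Hu)). simpl. apply (mcs_neg p0 u Hu). auto.
  - rewrite (IH (exist _ x Hx)). simpl. split.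
    + intros [Xa ([t Ht] & Rt & St)]. rewrite (IH (exist _ t Ht)) in St. simpl in *.
      apply NNPP. intro Nb. apply St. apply Rt. left. auto.
    + intro B. split. apply (m_A1 x Hx); auto.
      destruct (existence x Hx a) as [u [Hu [Ru Nu]]].
      { intros g Gg Hi. apply (S1 x Hx g a Gg Hi); auto. apply (m_A1 x Hx); auto. }
      exists (exist _ u Hu). split; auto.
      rewrite (IH (exist _ u Hu)). simpl. apply (mcs_neg p0 u Hu). auto.
Qed.

End Canon.

Lemma beval_fold {P : Type} (p0 : P) (v : form P -> bool) l g :
  beval v (fold_left (@And P) l g) = andb (beval v g) (beval v (conj p0 l)).
Proof.
  revert g; induction l as [|a l IH]; intro g; simpl fold_left; cbn [conj].
  - rewrite beval_top. now rewrite Bool.andb_true_r.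
  - rewrite IH. cbn [beval]. now rewrite Bool.andb_assoc.
Qed.

Lemma sat_fold {P S : Type} (R : S -> S -> Prop) V s l (g : form P) :
  sat R V s g -> (forall x, In x l -> sat R V s x) -> sat R V s (fold_left (@And P) l g).
Proof.
  revert g; induction l as [|a l IH]; intros g Hg Hl; simpl; auto.
  apply IH. simpl; split; auto. apply Hl; left; auto. intros x Hx; apply Hl; right; auto.
Qed.

Theorem theorem1 :
  forall (P : Type), inhabited P ->
  forall (Gamma : form P -> Prop) (phi : form P),
    derives Gamma phi <->
    (forall (S : Type) (R : S -> S -> Prop) (V : P -> S -> Prop) (s : S),
        inhabited S ->
        (forall g, Gamma g -> sat R V s g) -> sat R V s phi).
Proof.
  intros P [p0] Gamma phi. split.
  - intros [l [I D]] S R V s _ HG. destruct l as [|g l].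
    + apply (soundness phi D).
    + pose proof (soundness _ D S R V s) as H. rewrite sat_imp in H. apply H.
      apply sat_fold. apply HG, I; left; auto. intros x Hx; apply HG, I; right; auto.
  - intro H. apply NNPP. intro ND.
    assert (C : consis p0 (add Gamma (Neg phi))).
    { intro D. apply deduction in D. destruct D as [l [I D]]. apply ND.
      exists l. split; auto. destruct l as [|g l].
      - refine (prov_bool _ _ _ D). intros v E. rewrite beval_imp in E.
        specialize (E (beval_top p0 v)). unfold Bot in E. cbn [beval] in E.
        rewrite beval_imp in E. cbn [beval] in E. rewrite beval_top in E.
        destruct (beval v phi); simpl in *; auto.
      - refine (prov_bool _ _ _ D). intros v E. rewrite beval_imp in *. intro E1.
        rewrite (beval_fold p0) in E1. specialize (E E1). rewrite beval_imp in E.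
        unfold Bot in E. cbn [beval] in E. rewrite beval_top in E.
        destruct (beval v phi); simpl in *; auto. }
    destruct (lindenbaum p0 _ C) as [M [HM SM]].
    set (x := exist _ M HM : W p0).
    assert (Hx : sat (Rc p0) (Vc p0) x phi).
    { apply H. exact (inhabits x). intros g Hg. apply (truth p0). simpl. apply SM. left; auto. }
    apply (truth p0) in Hx. simpl in Hx.
    assert (Nx : M (Neg phi)) by (apply SM; right; auto).
    apply (mcs_neg p0 M HM) in Nx. auto.
Qed.
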